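(* Let $\alpha\in(0,1)$, $a,b\in\mathbb{R}$, $\tau>0$, and $Q(s)=s^\alpha-a-b e^{-s\tau}$ (principal branch of $s^\alpha$, defined for $s\in\mathbb{C}\setminus(-\infty,0]$). For any real numbers $\rho_1\le\rho_2$, the equation $Q(s)=0$ has at most finitely many roots in the vertical strip $\{z\in\mathbb{C}:\rho_1\le \operatorname{Re}z\le\rho_2\}$.
   Context: $s^\alpha=|s|^\alpha e^{i\alpha\arg s}$ with $\arg s\in(-\pi,\pi)$. *)

(* Defs.v *)
From Stdlib Require Import Reals List.
Open Scope R_scope.

Definition Cplx := (R * R)%type.
Definition Re (z : Cplx) : R := fst z.
Definition Im (z : Cplx) : R := snd z.

Definition Cmod (z : Cplx) : R := sqrt (Re z ^ 2 + Im z ^ 2).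

Definition in_slit_plane (z : Cplx) : Prop := ~ (Im z = 0 /\ Re z <= 0).

(* Principal argument (atan2), with values in (-pi, pi) on the slit plane. *)
Definition Carg (z : Cplx) : R :=
  let x := Re z in let y := Im z in
  if Rlt_dec 0 x then atan (y / x)
  else if Rlt_dec 0 y then PI / 2 - atan (x / y)
  else if Rlt_dec y 0 then - (PI / 2) - atan (x / y)
  else PI.

(* Principal power  s^alpha = |s|^alpha e^{i alpha arg s}  (s in slit plane). *)
Definition Cpow_principal (s : Cplx) (alpha : R) : Cplx :=
  (Rpower (Cmod s) alpha * cos (alpha * Carg s),
   Rpower (Cmod s) alpha * sin (alpha * Carg s)).

Definition Cexp (z : Cplx) : Cplx := (exp (Re z) * cos (Im z), exp (Re z) * sin (Im z)).

Definition Cadd (z w : Cplx) : Cplx := (Re z + Re w, Im z + Im w).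
Definition Cscal (r : R) (z : Cplx) : Cplx := (r * Re z, r * Im z).
Definition RtoC (r : R) : Cplx := (r, 0).

Definition Q (alpha a b tau : R) (s : Cplx) : Cplx :=
  Cadd (Cpow_principal s alpha)
       (Cadd (RtoC (- a)) (Cscal (- b) (Cexp (Cscal (- tau) s)))).

Definition C0 : Cplx := (0, 0).

(* Main.v *)
From Stdlib Require Import Reals Lra Psatz List Classical ClassicalEpsilon Factorial.
From Coquelicot Require Import Coquelicot.
Require Import Defs.
From Stdlib Require Import Reals List.
Open Scope R_scope.

Lemma sqrt_eq_l (a b : R) : 0 <= a -> a * a = b -> sqrt b = a.
Proof. intros Ha <-. apply sqrt_square; auto. Qed.

Definition rr (z : Cplx) := sqrt (fst z ^ 2 + snd z ^ 2).

Lemma slit_pos (z : Cplx) : in_slit_plane z -> 0 < fst z ^ 2 + snd z ^ 2.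
Proof.
  unfold in_slit_plane, Defs.Re, Defs.Im; destruct z as [x y]; simpl; intros H.
  destruct (Req_dec y 0) as [->|Hy].
  - assert (x > 0) by (destruct (Rle_dec x 0); [exfalso; tauto| lra]). nra.
  - assert (0 < y*y) by (apply Rsqr_pos_lt; auto). nra.
Qed.

Lemma rr_pos z : in_slit_plane z -> 0 < rr z.
Proof. intros H; apply sqrt_lt_R0, slit_pos, H. Qed.

Lemma rr_sq z : rr z * rr z = fst z ^ 2 + snd z ^ 2.
Proof. unfold rr; apply sqrt_sqrt; nra. Qed.

Lemma Carg_cs (z : Cplx) : in_slit_plane z ->
  cos (Carg z) = fst z / rr z /\ sin (Carg z) = snd z / rr z.
Proof.
  intros Hs. pose proof (rr_pos z Hs) as Hr. pose proof (rr_sq z) as Hr2.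
  revert Hs Hr Hr2. unfold Carg, in_slit_plane, Defs.Re, Defs.Im.
  destruct z as [x y]; simpl fst; simpl snd; set (r := rr (x,y)); intros Hs Hr Hr2.
  destruct (Rlt_dec 0 x) as [Hx|Hx].
  - rewrite cos_atan, sin_atan.
    assert (E : sqrt (1 + (y/x)²) = r / x).
    { apply sqrt_eq_l. apply Rlt_le, Rdiv_lt_0_compat; lra. unfold Rsqr. field_simplify_eq; [|lra]. nra. }
    rewrite E. split; field; lra.
  - destruct (Rlt_dec 0 y) as [Hy|Hy'].
    + rewrite cos_minus, sin_minus, cos_PI2, sin_PI2, cos_atan, sin_atan.
      assert (E : sqrt (1 + (x/y)²) = r / y).
      { apply sqrt_eq_l. apply Rlt_le, Rdiv_lt_0_compat; lra. unfold Rsqr. field_simplify_eq; [|lra]. nra. }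
      rewrite E. split; field; lra.
    + destruct (Rlt_dec y 0) as [Hy|Hy].
      * replace (- (PI/2) - atan (x/y)) with (-(PI/2 + atan (x/y))) by ring.
        rewrite cos_neg, sin_neg, cos_plus, sin_plus, cos_PI2, sin_PI2, cos_atan, sin_atan.
        assert (E : sqrt (1 + (x/y)²) = r / (-y)).
        { apply sqrt_eq_l. apply Rlt_le, Rdiv_lt_0_compat; lra. unfold Rsqr. field_simplify_eq; [|lra]. nra. }
        rewrite E. split; field; lra.
      * exfalso; apply Hs; split; lra.
Qed.

Lemma is_derive_eq (f : R -> R) x l l' : is_derive f x l -> l = l' -> is_derive f x l'.
Proof. intros H ->; exact H. Qed.

Lemma loc_pos (c d t0 : R) : 0 < c + t0 * d -> locally t0 (fun t => 0 < c + t * d).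
Proof.
  intros H. assert (He : 0 < (c + t0*d) / (Rabs d + 1)).
  { apply Rdiv_lt_0_compat; [lra| pose proof (Rabs_pos d); lra]. }
  exists (mkposreal _ He). intros t Ht. simpl in Ht.
  unfold ball in Ht; simpl in Ht; unfold AbsRing_ball, abs, minus, plus, opp in Ht; simpl in Ht.
  assert (Hb: Rabs ((t - t0) * d) <= Rabs (t + - t0) * Rabs d).
  { rewrite Rabs_mult. right; f_equal. }
  assert (Rabs (t + - t0) * Rabs d <= (c + t0*d) / (Rabs d + 1) * Rabs d).
  { apply Rmult_le_compat_r; [apply Rabs_pos|lra]. }
  assert ((c + t0*d) / (Rabs d + 1) * Rabs d < c + t0 * d).
  { pose proof (Rabs_pos d). apply (Rmult_lt_reg_r (Rabs d + 1)); [lra|].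
    field_simplify; [|lra]. nra. }
  pose proof (Rle_abs (-((t-t0)*d))) as H3. rewrite Rabs_Ropp in H3. nra.
Qed.

Definition line (p h : Cplx) (t : R) : Cplx := (fst p + t * fst h, snd p + t * snd h).

Lemma loc_neg (c d t0 : R) : c + t0 * d < 0 -> locally t0 (fun t => c + t * d < 0).
Proof.
  intros H. assert (H' : 0 < -c + t0 * (-d)) by lra.
  apply (filter_imp (fun t => 0 < -c + t * (-d))); [intros; lra| apply loc_pos; auto].
Qed.

Lemma Carg_A x y : 0 < x -> Carg (x,y) = atan (y/x).
Proof. intros H; unfold Carg, Defs.Re, Defs.Im; simpl. destruct (Rlt_dec 0 x); [auto|lra]. Qed.

Lemma Carg_B x y : 0 < y -> Carg (x,y) = PI/2 - atan (x/y).
Proof. intros H; unfold Carg, Defs.Re, Defs.Im; simpl. destruct (Rlt_dec 0 x).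
  - replace (y/x) with (/(x/y)) by (field; lra). apply atan_inv. apply Rdiv_lt_0_compat; lra.
  - destruct (Rlt_dec 0 y); [auto|lra]. Qed.

Lemma Carg_C x y : y < 0 -> Carg (x,y) = -(PI/2) - atan (x/y).
Proof. intros H; unfold Carg, Defs.Re, Defs.Im; simpl. destruct (Rlt_dec 0 x).
  - replace (y/x) with (-(/(x/(-y)))) by (field; lra). rewrite atan_opp, atan_inv.
    replace (x/y) with (-(x/(-y))) by (field; lra). rewrite atan_opp. ring.
    apply Rdiv_lt_0_compat; lra.
  - destruct (Rlt_dec 0 y); [lra|]. destruct (Rlt_dec y 0); [auto|lra]. Qed.

Lemma atan_quot_deriv (u v : R -> R) t du dv :
  is_derive u t du -> is_derive v t dv -> v t <> 0 ->
  is_derive (fun s => atan (u s / v s)) t ((du * v t - u t * dv) / (u t ^ 2 + v t ^ 2)).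
Proof.
  intros Hu Hv Hn.
  assert (Hq : is_derive (fun s => u s / v s) t ((du * v t - u t * dv) / (v t)^2)).
  { apply (is_derive_eq _ _ (((du * v t) - (u t * dv)) / (v t * v t))).
    - change (fun s => u s / v s) with (fun s => u s * / v s).
      apply is_derive_eq with (plus (scal du (/ v t)) (scal (u t) (opp (dv / (v t)^2)))) .
      + apply (is_derive_mult (fun s => u s) (fun s => / v s)); auto.
        * apply (is_derive_eq _ _ (- dv / (v t)^2)).
          -- apply is_derive_inv; auto.
          -- unfold opp; simpl; field; auto.
        * intros; apply Rmult_comm.
      + unfold plus, scal, opp; simpl; unfold mult; simpl. field; auto.
    - simpl. field; auto. }
  pose proof (is_derive_comp atan (fun s => u s / v s) t _ _ (is_derive_atan (u t / v t)) Hq) as Hc.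
  eapply is_derive_eq; [exact Hc|]. unfold scal; simpl; unfold mult; simpl. unfold Rsqr.
  field. split; auto. intros Hz. assert (0 < v t * v t) by (apply Rsqr_pos_lt; auto). nra.
Qed.

Lemma Carg_deriv p h t0 : in_slit_plane (line p h t0) ->
  is_derive (fun t => Carg (line p h t)) t0
    ((fst (line p h t0) * snd h - snd (line p h t0) * fst h) /
     (fst (line p h t0) ^ 2 + snd (line p h t0) ^ 2)).
Proof.
  intros Hs. unfold line in *; simpl fst in *; simpl snd in *.
  set (x0 := fst p + t0 * fst h) in *. set (y0 := snd p + t0 * snd h) in *.
  destruct (Rlt_dec 0 x0) as [Hx|Hx].
  - apply is_derive_ext_loc with (fun t => atan ((snd p + t * snd h)/(fst p + t * fst h))).
    { apply (filter_imp (fun t => 0 < fst p + t * fst h)); [|apply loc_pos; auto].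
      intros t Ht. rewrite Carg_A; auto. }
    eapply is_derive_eq.
    + apply (atan_quot_deriv (fun t => snd p + t * snd h) (fun t => fst p + t * fst h)).
      * auto_derive; auto. * auto_derive; auto. * simpl; fold x0; lra.
    + simpl. fold x0 y0. field. intros Hz. nra.
  - destruct (Rlt_dec 0 y0) as [Hy|Hy'].
    + apply is_derive_ext_loc with (fun t => PI/2 - atan ((fst p + t * fst h)/(snd p + t * snd h))).
      { apply (filter_imp (fun t => 0 < snd p + t * snd h)); [|apply loc_pos; auto].
        intros t Ht. rewrite Carg_B; auto. }
      eapply is_derive_eq.
      * apply (is_derive_minus (fun _ => PI/2)). apply is_derive_const.
        apply (atan_quot_deriv (fun t => fst p + t * fst h) (fun t => snd p + t * snd h)).
        -- auto_derive; auto. -- auto_derive; auto. -- simpl; fold y0; lra.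
      * simpl. fold x0 y0. unfold minus, plus, opp, zero; simpl. field. intros Hz. nra.
    + assert (Hy : y0 < 0).
      { destruct (Req_dec y0 0) as [E|E]; [|lra]. exfalso. apply Hs. unfold Defs.Re, Defs.Im; simpl. split; lra. }
      apply is_derive_ext_loc with (fun t => -(PI/2) - atan ((fst p + t * fst h)/(snd p + t * snd h))).
      { apply (filter_imp (fun t => snd p + t * snd h < 0)); [|apply loc_neg; auto].
        intros t Ht. rewrite Carg_C; auto. }
      eapply is_derive_eq.
      * apply (is_derive_minus (fun _ => -(PI/2))). apply is_derive_const.
        apply (atan_quot_deriv (fun t => fst p + t * fst h) (fun t => snd p + t * snd h)).
        -- auto_derive; auto. -- auto_derive; auto. -- simpl; fold y0; lra.
      * simpl. fold x0 y0. unfold minus, plus, opp, zero; simpl. field. intros Hz. nra.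
Qed.

Definition cderiv (f : R -> Cplx) t (l : Cplx) :=
  is_derive (fun u => fst (f u)) t (fst l) /\ is_derive (fun u => snd (f u)) t (snd l).

Definition P (be : R) (z : Cplx) : Cplx := Cpow_principal z be.

Lemma rr_line_deriv p h t0 : in_slit_plane (line p h t0) ->
  is_derive (fun t => rr (line p h t)) t0
   ((fst (line p h t0) * fst h + snd (line p h t0) * snd h) / rr (line p h t0)).
Proof.
  intros Hs. pose proof (slit_pos _ Hs) as Hq. pose proof (rr_pos _ Hs) as Hr.
  unfold rr, line in *; simpl fst in *; simpl snd in *.
  auto_derive. lra. assert (E : forall a b : R, a*(a*1)+b*(b*1) = a^2+b^2) by (intros; ring). rewrite E. field. lra.
Qed.

Lemma Rpower_line_deriv be p h t0 : in_slit_plane (line p h t0) ->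
  is_derive (fun t => Rpower (rr (line p h t)) be) t0
   (be * Rpower (rr (line p h t0)) be *
    ((fst (line p h t0) * fst h + snd (line p h t0) * snd h) / (rr (line p h t0) * rr (line p h t0)))).
Proof.
  intros Hs. pose proof (rr_pos _ Hs) as Hr.
  pose proof (rr_line_deriv p h t0 Hs) as Hd.
  assert (Hp : is_derive (fun u => Rpower u be) (rr (line p h t0)) (be * Rpower (rr (line p h t0)) (be - 1))).
  { apply is_derive_Reals. apply derivable_pt_lim_power; auto. }
  pose proof (is_derive_comp (fun u => Rpower u be) (fun t => rr (line p h t)) t0 _ _ Hp Hd) as Hc.
  eapply is_derive_eq; [exact Hc|]. unfold scal; simpl; unfold mult; simpl.
  unfold Rminus. rewrite Rpower_plus, Rpower_Ropp, Rpower_1 by auto. field. lra.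
Qed.

Lemma P_deriv be p h t0 : in_slit_plane (line p h t0) ->
  cderiv (fun t => P be (line p h t)) t0
    (Cmult (Cmult (RtoC be) (P (be - 1) (line p h t0))) h).
Proof.
  intros Hs. pose proof (rr_pos _ Hs) as Hr. pose proof (rr_sq (line p h t0)) as Hr2.
  pose proof (Rpower_line_deriv be p h t0 Hs) as HR.
  pose proof (Carg_deriv p h t0 Hs) as HT.
  destruct (Carg_cs _ Hs) as [Hc Hsn].
  unfold P, Cpow_principal. fold (rr (line p h t0)). 
  change (fun t => Defs.Cmod (line p h t)) with (fun t => rr (line p h t)).
  set (x := fst (line p h t0)) in *. set (y := snd (line p h t0)) in *.
  set (r := rr (line p h t0)) in *. set (th := Carg (line p h t0)) in *.
  assert (Hm : Rpower r (be - 1) = Rpower r be / r).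
  { unfold Rminus. rewrite Rpower_plus, Rpower_Ropp, Rpower_1 by auto. field. lra. }
  assert (Hcos : cos ((be - 1) * th) = cos (be * th) * (x / r) + sin (be * th) * (y / r)).
  { replace ((be - 1) * th) with (be * th - th) by ring. rewrite cos_minus, <- Hc, <- Hsn. ring. }
  assert (Hsin : sin ((be - 1) * th) = sin (be * th) * (x / r) - cos (be * th) * (y / r)).
  { replace ((be - 1) * th) with (be * th - th) by ring. rewrite sin_minus, <- Hc, <- Hsn. ring. }
  split; simpl fst; simpl snd.
  - eapply is_derive_eq.
    + apply (is_derive_mult (fun t => Rpower (rr (line p h t)) be) (fun t => cos (be * Carg (line p h t)))).
      * exact HR.
      * apply (is_derive_comp cos (fun t => be * Carg (line p h t))).
        -- apply is_derive_cos.
        -- apply (is_derive_scal (fun t => Carg (line p h t))). exact HT.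
      * intros; apply Rmult_comm.
    + unfold plus, scal, mult, opp; simpl. fold th x y r.
      unfold Defs.Cmod, Defs.Re, Defs.Im. fold (rr (line p h t0)). fold r.
      unfold Rminus at 1. rewrite Hm, Hcos, Hsin. replace (x*(x*1)+y*(y*1)) with (r*r) by (rewrite Hr2; ring). unfold mult; simpl. field. lra.
  - eapply is_derive_eq.
    + apply (is_derive_mult (fun t => Rpower (rr (line p h t)) be) (fun t => sin (be * Carg (line p h t)))).
      * exact HR.
      * apply (is_derive_comp sin (fun t => be * Carg (line p h t))).
        -- apply is_derive_sin.
        -- apply (is_derive_scal (fun t => Carg (line p h t))). exact HT.
      * intros; apply Rmult_comm.
    + unfold plus, scal, mult, opp; simpl. fold th x y r.
      unfold Defs.Cmod, Defs.Re, Defs.Im. fold (rr (line p h t0)). fold r.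
      rewrite Hm, Hcos, Hsin. replace (x*(x*1)+y*(y*1)) with (r*r) by (rewrite Hr2; ring). unfold mult; simpl. field. lra.
Qed.

Notation cmod := Coquelicot.Complex.Cmod.
Notation CR := Coquelicot.Complex.RtoC.

Definition E (tau : R) (z : Cplx) : Cplx := Cexp (Cscal (- tau) z).

Lemma der_cmul k (f : R -> R) t d : is_derive f t d -> is_derive (fun u => k * f u) t (k * d).
Proof.
  intros H. apply is_derive_Reals. apply is_derive_Reals in H.
  apply (derivable_pt_lim_scal f k t d H).
Qed.

Lemma der_plus (f g : R -> R) t d e : is_derive f t d -> is_derive g t e -> is_derive (fun u => f u + g u) t (d + e).
Proof.
  intros H1 H2. apply is_derive_Reals. apply is_derive_Reals in H1. apply is_derive_Reals in H2.
  apply (derivable_pt_lim_plus f g t d e H1 H2).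
Qed.

Lemma der_minus (f g : R -> R) t d e : is_derive f t d -> is_derive g t e -> is_derive (fun u => f u - g u) t (d - e).
Proof.
  intros H1 H2. apply is_derive_Reals. apply is_derive_Reals in H1. apply is_derive_Reals in H2.
  apply (derivable_pt_lim_minus f g t d e H1 H2).
Qed.

Lemma E_deriv tau p h t0 :
  cderiv (fun t => E tau (line p h t)) t0 (Cmult (Cmult (CR (- tau)) (E tau (line p h t0))) h).
Proof.
  unfold E, Cexp, Cscal, line, Defs.Re, Defs.Im; simpl. split; simpl; auto_derive; try exact I; ring.
Qed.

Lemma cderiv_plus f g t a b : cderiv f t a -> cderiv g t b ->
  cderiv (fun u => Cplus (f u) (g u)) t (Cplus a b).
Proof.
  intros [H1 H2] [H3 H4]; split; simpl.
  - apply der_plus; auto.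
  - apply der_plus; auto.
Qed.

Lemma cderiv_cmul c f t a : cderiv f t a -> cderiv (fun u => Cmult c (f u)) t (Cmult c a).
Proof.
  intros [H1 H2]; split; simpl.
  - apply der_minus; apply der_cmul; auto.
  - apply der_plus; apply der_cmul; auto.
Qed.

Lemma cderiv_const (c : Cplx) t : cderiv (fun _ => c) t (CR 0).
Proof. split; simpl; apply is_derive_Reals; apply derivable_pt_lim_const. Qed.

Lemma cderiv_ext f g t a b : (forall u, f u = g u) -> a = b -> cderiv f t a -> cderiv g t b.
Proof.
  intros Hfg -> [H1 H2]; split.
  - apply (is_derive_ext (fun u => fst (f u))); auto. intros; rewrite Hfg; auto.
  - apply (is_derive_ext (fun u => snd (f u))); auto. intros; rewrite Hfg; auto.
Qed.

Section Fam.
Variables (al a b tau : R).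

Fixpoint cc (j : nat) : R := match j with O => 1 | S j => cc j * (al - INR j) end.

Definition F (j : nat) (z : Cplx) : Cplx :=
  Cplus (Cmult (CR (cc j)) (P (al - INR j) z))
   (Cplus (CR (match j with O => - a | _ => 0 end)) (Cmult (CR (- b * (- tau) ^ j)) (E tau z))).

Lemma F_deriv j p h t0 : in_slit_plane (line p h t0) ->
  cderiv (fun t => F j (line p h t)) t0 (Cmult (F (S j) (line p h t0)) h).
Proof.
  intros Hs. unfold F.
  eapply cderiv_ext; [intros; reflexivity| |].
  2:{ apply cderiv_plus. apply cderiv_cmul. apply P_deriv; auto.
      apply cderiv_plus. apply cderiv_const. apply cderiv_cmul. apply E_deriv. }
  simpl cc. replace (al - INR j - 1) with (al - INR (S j)) by (rewrite S_INR; ring).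
  rewrite !RtoC_mult. simpl pow. rewrite !RtoC_mult. change (Defs.RtoC (al - INR j)) with (CR (al - INR j)). match goal with |- ?L = ?R => change (@eq Coquelicot.Complex.C L R) end. ring.
Qed.

End Fam.

Lemma cmod_l1 (z : Cplx) : cmod z <= Rabs (fst z) + Rabs (snd z).
Proof.
  unfold Coquelicot.Complex.Cmod. destruct z as [x y]; simpl.
  rewrite <- (sqrt_square (Rabs x + Rabs y)) by (pose proof (Rabs_pos x); pose proof (Rabs_pos y); lra).
  apply sqrt_le_1_alt. pose proof (Rabs_pos x); pose proof (Rabs_pos y).
  assert (x^2 = Rabs x * Rabs x) by (rewrite <- Rabs_mult; simpl; rewrite Rmult_1_r; symmetry; apply Rabs_pos_eq; nra). assert (y^2 = Rabs y * Rabs y) by (rewrite <- Rabs_mult; simpl; rewrite Rmult_1_r; symmetry; apply Rabs_pos_eq; nra). nra.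
Qed.

Lemma fst_le_cmod (z : Cplx) : Rabs (fst z) <= cmod z.
Proof. pose proof (Rmax_Cmod z). pose proof (Rmax_l (Rabs (fst z)) (Rabs (snd z))). lra. Qed.
Lemma snd_le_cmod (z : Cplx) : Rabs (snd z) <= cmod z.
Proof. pose proof (Rmax_Cmod z). pose proof (Rmax_r (Rabs (fst z)) (Rabs (snd z))). lra. Qed.

Lemma cmvt (g g' : R -> Cplx) M :
  (forall t, 0 <= t <= 1 -> cderiv g t (g' t)) ->
  (forall t, 0 <= t <= 1 -> cmod (g' t) <= M) ->
  cmod (Cminus (g 1) (g 0)) <= 2 * M.
Proof.
  intros Hd Hb.
  assert (Rmin 0 1 = 0) by (unfold Rmin; destruct Rle_dec; lra).
  assert (Rmax 0 1 = 1) by (unfold Rmax; destruct Rle_dec; lra).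
  destruct (MVT_abs (fun t => fst (g t)) (fun t => fst (g' t)) 0 1) as [c1 [E1 I1]].
  { intros c Hc. rewrite H, H0 in Hc. apply is_derive_Reals. apply (Hd c Hc). }
  destruct (MVT_abs (fun t => snd (g t)) (fun t => snd (g' t)) 0 1) as [c2 [E2 I2]].
  { intros c Hc. rewrite H, H0 in Hc. apply is_derive_Reals. apply (Hd c Hc). }
  rewrite H, H0 in I1, I2.
  pose proof (cmod_l1 (Cminus (g 1) (g 0))).
  replace (Rabs (1 - 0)) with 1 in E1, E2 by (rewrite Rminus_0_r, Rabs_R1; auto).
  pose proof (fst_le_cmod (g' c1)). pose proof (snd_le_cmod (g' c2)).
  pose proof (Hb c1 I1). pose proof (Hb c2 I2).
  simpl in H1. unfold Rminus in E1, E2. lra.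
Qed.

Lemma line_0 p h : line p h 0 = p.
Proof. destruct p; unfold line; simpl; f_equal; ring. Qed.

Lemma line_scale p h u : line p (Cmult (CR u) h) 1 = line p h u.
Proof. unfold line; simpl; f_equal; ring. Qed.

Lemma cmod_line p h u : cmod (Cminus (line p h u) p) = Rabs u * cmod h.
Proof.
  replace (Cminus (line p h u) p) with (Cmult (CR u) h).
  - rewrite Cmod_mult, Cmod_R; auto.
  - unfold line; destruct p, h; simpl. unfold Cminus, Cplus, Copp, Cmult; simpl. f_equal; ring.
Qed.

Lemma cderiv_poly k (W : Cplx) u :
  cderiv (fun v => Cmult W (CR (v ^ S k / INR (fact (S k))))) u (Cmult W (CR (u ^ k / INR (fact k)))).
Proof.
  apply cderiv_cmul. split; simpl.
  - pose proof (INR_fact_neq_0 k). auto_derive; auto.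
    replace (INR (fact k + k * fact k)) with (INR (S k) * INR (fact k)) by (rewrite <- mult_INR; f_equal; simpl; lia).
    assert (HS : INR (S k) <> 0) by (apply not_0_INR; lia).
    destruct k as [|k1]; simpl pred; [simpl; field|].
    replace (u * (1 * (INR (S k1) * u ^ k1))) with (INR (S k1) * u ^ S k1) by (simpl; ring).
    rewrite (S_INR (S k1)) in *. field. split; auto.
  - apply is_derive_Reals; apply derivable_pt_lim_const.
Qed.

Lemma cderiv_opp f t a : cderiv f t a -> cderiv (fun u => Copp (f u)) t (Copp a).
Proof.
  intros [H1 H2]; split; simpl; apply is_derive_Reals;
  [apply is_derive_Reals in H1 | apply is_derive_Reals in H2];
  apply (derivable_pt_lim_opp _ _ _); auto.
Qed.

Lemma taylor : forall k (G : nat -> Cplx -> Cplx) p d M,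
  (forall j h u, cmod (Cminus (line p h u) p) < d ->
     cderiv (fun v => G j (line p h v)) u (Cmult (G (S j) (line p h u)) h)) ->
  (forall z, cmod (Cminus z p) < d -> cmod (G (S k) z) <= M) ->
  (forall j, (j < k)%nat -> G j p = CR 0) ->
  forall h, cmod h < d ->
  cmod (Cminus (G 0%nat (line p h 1)) (Cmult (Cmult (G k p) (Cpow h k)) (CR (/ INR (fact k)))))
    <= 2 ^ (S k) * M * cmod h ^ (S k).
Proof.
  induction k as [|k IH]; intros G p d M Hd HM Hz h Hh.
  - assert (Hb : forall u, 0 <= u <= 1 -> cmod (Cminus (line p h u) p) < d).
    { intros u Hu. rewrite cmod_line. pose proof (Cmod_ge_0 h). rewrite Rabs_pos_eq by lra. nra. }
    pose proof (cmvt (fun u => G 0%nat (line p h u)) (fun u => Cmult (G 1%nat (line p h u)) h) (M * cmod h)) as Hm.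
    cbv beta in Hm; rewrite line_0 in Hm.
    replace (Cmult (Cmult (G 0%nat p) (Cpow h 0)) (CR (/ INR (fact 0)))) with (G 0%nat p).
    2:{ simpl. replace (/ 1) with 1 by field. rewrite !Cmult_1_r; reflexivity. }
    simpl pow. replace (2 * 1 * M * (cmod h * 1)) with (2 * (M * cmod h)) by ring.
    apply Hm.
    + intros u Hu. apply Hd. apply Hb; auto.
    + intros u Hu. rewrite Cmod_mult. apply Rmult_le_compat_r; [apply Cmod_ge_0|]. apply HM, Hb; auto.
  - assert (Hb : forall u, 0 <= u <= 1 -> cmod (Cminus (line p h u) p) < d).
    { intros u Hu. rewrite cmod_line. pose proof (Cmod_ge_0 h). rewrite Rabs_pos_eq by lra. nra. }
    set (W := Cmult (G (S k) p) (Cpow h (S k))).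
    pose proof (cmvt (fun u => Cminus (G 0%nat (line p h u)) (Cmult W (CR (u ^ S k / INR (fact (S k))))))
                     (fun u => Cminus (Cmult (G 1%nat (line p h u)) h) (Cmult W (CR (u ^ k / INR (fact k)))))
                     (2 ^ S k * M * cmod h ^ S k * cmod h)) as Hm.
    cbv beta in Hm; rewrite line_0, (Hz 0%nat ltac:(lia)) in Hm.
    replace (Cminus (G 0%nat (line p h 1)) (Cmult W (CR (/ INR (fact (S k))))))
      with (Cminus (Cminus (G 0%nat (line p h 1)) (Cmult W (CR (1 ^ S k / INR (fact (S k))))))
                   (Cminus (CR 0) (Cmult W (CR (0 ^ S k / INR (fact (S k))))))).
    2:{ rewrite pow1. rewrite (pow_i (S k)) by lia. unfold Rdiv. rewrite Rmult_0_l, Rmult_1_l. match goal with |- ?L = ?R => change (@eq Coquelicot.Complex.C L R) end. ring. }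
    replace (2 ^ S (S k) * M * cmod h ^ S (S k)) with (2 * (2 ^ S k * M * cmod h ^ S k * cmod h)) by (simpl; ring).
    apply Hm.
    + intros u Hu. unfold Cminus. apply cderiv_plus.
      * apply Hd, Hb; auto.
      * apply cderiv_opp. apply cderiv_poly.
    + intros u Hu.
      replace (Cminus (Cmult (G 1%nat (line p h u)) h) (Cmult W (CR (u ^ k / INR (fact k)))))
        with (Cmult (Cminus (G 1%nat (line p (Cmult (CR u) h) 1))
          (Cmult (Cmult (G (S k) p) (Cpow (Cmult (CR u) h) k)) (CR (/ INR (fact k))))) h).
      2:{ rewrite line_scale. unfold W. rewrite Cpow_mult_l, Cpow_S, <- RtoC_pow.
          unfold Rdiv. rewrite RtoC_mult.
          match goal with |- ?L = ?R => change (@eq Coquelicot.Complex.C L R) end. ring. }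
      rewrite Cmod_mult. apply Rmult_le_compat_r; [apply Cmod_ge_0|].
      assert (Hu' : cmod (Cmult (CR u) h) <= cmod h).
      { rewrite Cmod_mult, Cmod_R, Rabs_pos_eq by lra. pose proof (Cmod_ge_0 h). nra. }
      eapply Rle_trans.
      * apply (IH (fun j => G (S j)) p d M).
        -- intros j h' u' Hh'. apply Hd; auto.
        -- intros z Hz'. apply HM; auto.
        -- intros j Hj. apply Hz. lia.
        -- lra.
      * apply Rmult_le_compat_l.
        -- apply Rmult_le_pos. apply pow_le; lra.
           pose proof (HM p). apply Rle_trans with (cmod (G (S (S k)) p)); [apply Cmod_ge_0|].
           apply HM. replace (Cminus p p) with (CR 0) by (match goal with |- ?L = ?R => change (@eq Coquelicot.Complex.C L R) end; ring).
           rewrite Cmod_0. pose proof (Cmod_ge_0 h); lra.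
        -- apply pow_incr. split; [apply Cmod_ge_0| auto].
Qed.

Lemma rr_cmod z : rr z = cmod z.
Proof. reflexivity. Qed.

Lemma cmod_P be z : cmod (P be z) = Rpower (rr z) be.
Proof.
  unfold P, Cpow_principal, Coquelicot.Complex.Cmod; cbn [fst snd].
  change (Defs.Cmod z) with (rr z).
  set (R0 := Rpower (rr z) be). set (t := be * Carg z).
  replace ((R0 * cos t)^2 + (R0 * sin t)^2) with (R0 * R0) .
  - apply sqrt_square. unfold R0, Rpower. left; apply exp_pos.
  - pose proof (sin2_cos2 t). unfold Rsqr in H. nra.
Qed.

Lemma cmod_E tau z : cmod (E tau z) = exp (- tau * fst z).
Proof.
  unfold E, Cexp, Cscal, Coquelicot.Complex.Cmod, Defs.Re, Defs.Im; cbn [fst snd].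
  set (R0 := exp (- tau * fst z)). set (t := - tau * snd z).
  replace ((R0 * cos t)^2 + (R0 * sin t)^2) with (R0 * R0) .
  - apply sqrt_square. unfold R0. left; apply exp_pos.
  - pose proof (sin2_cos2 t). unfold Rsqr in H. nra.
Qed.

Lemma P_succ be z : in_slit_plane z -> P (be + 1) z = Cmult (P be z) z.
Proof.
  intros Hs. pose proof (rr_pos _ Hs) as Hr. destruct (Carg_cs _ Hs) as [Hc Hsn].
  unfold P, Cpow_principal. change (Defs.Cmod z) with (rr z).
  rewrite Rpower_plus, Rpower_1 by auto.
  replace ((be + 1) * Carg z) with (be * Carg z + Carg z) by ring.
  rewrite cos_plus, sin_plus, Hc, Hsn. unfold Cmult; simpl. f_equal; field; lra.
Qed.

Lemma CR_inj x y : CR x = CR y -> x = y.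
Proof. intros H. apply (f_equal fst) in H. exact H. Qed.

Lemma Cmult_eq0 (x y : Coquelicot.Complex.C) : Cmult x y = CR 0 -> x <> CR 0 -> y = CR 0.
Proof.
  intros H Hx. destruct (classic (y = CR 0)) as [|Hy]; auto.
  exfalso. apply (Cmult_neq_0 x y Hx Hy). exact H.
Qed.

Lemma P_neq0 be z : in_slit_plane z -> P be z <> CR 0.
Proof.
  intros Hs H. pose proof (cmod_P be z) as Hm. rewrite H, Cmod_0 in Hm.
  unfold Rpower in Hm. pose proof (exp_pos (be * ln (rr z))). lra.
Qed.

Lemma slit_neq0 z : in_slit_plane z -> z <> CR 0.
Proof. intros Hs H. subst. apply Hs. unfold Defs.Re, Defs.Im; simpl; split; lra. Qed.

Section Fam2.
Variables (al a b tau : R).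
Hypothesis Hal : 0 < al < 1.
Hypothesis Htau : 0 < tau.

Lemma F0_Q z : F al a b tau 0 z = Q al a b tau z.
Proof.
  unfold F, Q, P, E, Cadd, Cscal, Defs.RtoC, Defs.Re, Defs.Im; simpl.
  replace (al - 0) with al by ring.
  unfold Cplus, Cmult; simpl. f_equal; ring.
Qed.

Lemma F123_not_all p : in_slit_plane p ->
  ~ (F al a b tau 1 p = CR 0 /\ F al a b tau 2 p = CR 0 /\ F al a b tau 3 p = CR 0).
Proof.
  intros Hs [H1 [H2 H3]].
  unfold F in H1, H2, H3. simpl cc in *. simpl INR in *.
  set (u := P (al - (1+1+1)) p) in *.
  assert (E2 : P (al - (1+1)) p = Cmult u p).
  { unfold u. rewrite <- P_succ by auto. f_equal. ring. }
  assert (E1 : P (al - 1) p = Cmult (Cmult u p) p).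
  { rewrite <- E2. rewrite <- P_succ by auto. f_equal. ring. }
  rewrite E1 in H1. rewrite E2 in H2.
  set (e := E tau p) in *.
  assert (X1 : Cmult (Cmult (Cmult (CR al) u) p) (Cplus (Cmult (CR tau) p) (CR (al - 1))) = CR 0).
  { transitivity (Cplus (Cmult (CR tau) (F al a b tau 1 p)) (F al a b tau 2 p)).
    - unfold F. simpl cc. simpl INR. fold u e. rewrite E1, E2. clearbody u e. destruct u, p, e. apply injective_projections; simpl; ring.
    - unfold F. simpl cc. simpl INR. fold u e. rewrite E1, E2. rewrite H1, H2.
      match goal with |- ?L = ?R => change (@eq Coquelicot.Complex.C L R) end. ring. }
  assert (X2 : Cmult (Cmult (CR (al * (al - 1))) u) (Cplus (Cmult (CR tau) p) (CR (al - (1+1)))) = CR 0).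
  { transitivity (Cplus (Cmult (CR tau) (F al a b tau 2 p)) (F al a b tau 3 p)).
    - unfold F. simpl cc. simpl INR. fold u e. rewrite E2. clearbody u e. destruct u, p, e. apply injective_projections; simpl; ring.
    - unfold F. simpl cc. simpl INR. fold u e. rewrite E2. rewrite H2, H3.
      match goal with |- ?L = ?R => change (@eq Coquelicot.Complex.C L R) end. ring. }
  assert (Hal0 : CR al <> CR 0) by (intros Hc; apply CR_inj in Hc; lra).
  assert (Hal1 : CR (al * (al - 1)) <> CR 0).
  { intros Hc; apply CR_inj in Hc. assert (al * (1 - al) > 0) by (apply Rmult_lt_0_compat; lra). nra. }
  pose proof (P_neq0 (al - (1+1+1)) p Hs) as Hu. fold u in Hu.
  pose proof (slit_neq0 p Hs) as Hp.
  apply Cmult_eq0 in X1; [| apply Cmult_neq_0; [apply Cmult_neq_0|]; auto].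
  apply Cmult_eq0 in X2; [| apply Cmult_neq_0; auto].
  apply (f_equal fst) in X1. apply (f_equal fst) in X2. simpl in X1, X2. lra.
Qed.

Lemma ball_slit p : in_slit_plane p -> exists d m, 0 < d /\ 0 < m /\
  forall z, cmod (Cminus z p) < d ->
    in_slit_plane z /\ m <= rr z /\ rr z <= rr p + d /\ fst p - d <= fst z.
Proof.
  intros Hs.
  assert (Gen : forall d m, 0 < d -> 0 < m -> (forall z, cmod (Cminus z p) < d -> in_slit_plane z /\ m <= rr z) ->
     exists d m, 0 < d /\ 0 < m /\ forall z, cmod (Cminus z p) < d ->
    in_slit_plane z /\ m <= rr z /\ rr z <= rr p + d /\ fst p - d <= fst z).
  { intros d m Hd Hm H. exists d, m. split; [auto|split; [auto|]].
    intros z Hz; destruct (H z Hz) as [Hz1 Hz2]; split; [auto|split; [auto|split]].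
    - replace z with (Cplus p (Cminus z p)) by (match goal with |- ?L = ?R => change (@eq Coquelicot.Complex.C L R) end; ring).
      rewrite !rr_cmod. change (rr p) with (cmod p). pose proof (Cmod_triangle p (Cminus z p)). lra.
    - pose proof (fst_le_cmod (Cminus z p)) as H1. simpl in H1. pose proof (Rle_abs (-(fst z + - fst p))) as H2.
      rewrite Rabs_Ropp in H2. lra. }
  unfold in_slit_plane, Defs.Re, Defs.Im in Hs.
  destruct (Rlt_dec 0 (fst p)) as [Hx|Hx].
  - apply (Gen (fst p / 2) (fst p / 2)); try lra. intros z Hz.
    pose proof (fst_le_cmod (Cminus z p)). simpl in H. pose proof (Rle_abs (-(fst z + - fst p))).
    rewrite Rabs_Ropp in H0. assert (fst z > fst p / 2) by lra. split.
    + unfold in_slit_plane, Defs.Re, Defs.Im. lra.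
    + rewrite rr_cmod. pose proof (fst_le_cmod z). pose proof (Rle_abs (fst z)). lra.
  - assert (Hy : snd p <> 0) by (intros Hy; apply Hs; split; lra).
    assert (Ha : 0 < Rabs (snd p)) by (apply Rabs_pos_lt; auto).
    apply (Gen (Rabs (snd p) / 2) (Rabs (snd p) / 2)); try lra. intros z Hz.
    pose proof (snd_le_cmod (Cminus z p)). simpl in H.
    assert (Rabs (snd z) > Rabs (snd p) / 2).
    { pose proof (Rabs_triang (snd z + - snd p) (snd p)). replace (snd z + - snd p + snd p) with (snd z) in H0 by ring.
      pose proof (Rabs_triang_inv (snd p) (snd z)). pose proof (Rabs_minus_sym (snd p) (snd z)).
      unfold Rminus in *. rewrite H2 in H1. lra. }
    split.
    + unfold in_slit_plane, Defs.Re, Defs.Im. intros [H1 H2]. rewrite H1, Rabs_R0 in H0. lra.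
    + rewrite rr_cmod. pose proof (snd_le_cmod z). lra.
Qed.

Lemma Rpower_between r m M be : 0 < m -> m <= r -> r <= M -> Rpower r be <= Rpower m be + Rpower M be.
Proof.
  intros Hm H1 H2. assert (0 < Rpower m be) by (unfold Rpower; apply exp_pos).
  assert (0 < Rpower M be) by (unfold Rpower; apply exp_pos).
  destruct (Rle_dec 0 be).
  - pose proof (Rle_Rpower_l r M be r0 (conj (Rlt_le_trans _ _ _ Hm H1) H2)). lra.
  - replace be with (- (- be)) by ring. rewrite !(Rpower_Ropp _ (- be)).
    assert (0 < Rpower m (- be)) by (unfold Rpower; apply exp_pos).
    assert (Rpower m (-be) <= Rpower r (-be)) by (apply Rle_Rpower_l; lra).
    assert (/ Rpower r (- be) <= / Rpower m (- be)) by (apply Rinv_le_contravar; lra).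
    assert (0 < / Rpower M (-be)) by (apply Rinv_0_lt_compat; unfold Rpower; apply exp_pos).
    lra.
Qed.

Lemma F_bound p d m j : 0 < m ->
  (forall z, cmod (Cminus z p) < d -> in_slit_plane z /\ m <= rr z /\ rr z <= rr p + d /\ fst p - d <= fst z) ->
  exists M, 0 < M /\ forall z, cmod (Cminus z p) < d -> cmod (F al a b tau j z) <= M.
Proof.
  intros Hm Hb.
  set (be := al - INR j).
  exists (Rabs (cc al j) * (Rpower m be + Rpower (rr p + d) be)
          + Rabs (match j with O => - a | _ => 0 end)
          + Rabs (- b * (- tau) ^ j) * exp (- tau * (fst p - d)) + 1).
  split.
  - assert (0 < Rpower m be) by (unfold Rpower; apply exp_pos).
    assert (0 < Rpower (rr p + d) be) by (unfold Rpower; apply exp_pos).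
    pose proof (Rabs_pos (cc al j)). pose proof (Rabs_pos (match j with O => - a | _ => 0 end)).
    pose proof (Rabs_pos (- b * (- tau) ^ j)). pose proof (exp_pos (- tau * (fst p - d))). nra.
  - intros z Hz. destruct (Hb z Hz) as [Hs [H1 [H2 H3]]].
    unfold F. fold be.
    eapply Rle_trans; [apply Cmod_triangle|].
    eapply Rle_trans; [apply Rplus_le_compat_l, Cmod_triangle|].
    rewrite !Cmod_mult, !Cmod_R, cmod_P, cmod_E.
    pose proof (Rpower_between (rr z) m (rr p + d) be Hm H1 H2).
    assert (exp (- tau * fst z) <= exp (- tau * (fst p - d))).
    { destruct (Req_dec (fst z) (fst p - d)) as [->|]; [lra|]. left; apply exp_increasing. nra. }
    pose proof (Rabs_pos (cc al j)). pose proof (Rabs_pos (- b * (- tau) ^ j)).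
    apply Rmult_le_compat_l with (r := Rabs (cc al j)) in H; auto.
    apply Rmult_le_compat_l with (r := Rabs (- b * (- tau) ^ j)) in H0; auto. lra.
Qed.

Lemma line_1 p z : line p (Cminus z p) 1 = z.
Proof. destruct p, z; unfold line; simpl; f_equal; ring. Qed.

Lemma isolate p k : in_slit_plane p ->
  (forall j, (j < k)%nat -> F al a b tau j p = CR 0) -> F al a b tau k p <> CR 0 ->
  exists d', 0 < d' /\ forall z, cmod (Cminus z p) < d' -> F al a b tau 0 z = CR 0 -> z = p.
Proof.
  intros Hs Hz Hk.
  destruct (ball_slit p Hs) as [d [m [Hd [Hm Hb]]]].
  destruct (F_bound p d m (S k) Hm Hb) as [M [HM HMb]].
  set (c := cmod (F al a b tau k p)).
  assert (Hc : 0 < c) by (apply Cmod_gt_0; auto).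
  assert (Hf : 0 < INR (fact k)) by (apply lt_0_INR, lt_O_fact).
  assert (H2 : 0 < 2 ^ S k) by (apply pow_lt; lra).
  set (K := INR (fact k) * 2 ^ S k * M).
  assert (HK : 0 < K) by (unfold K; apply Rmult_lt_0_compat; [apply Rmult_lt_0_compat|]; auto).
  exists (Rmin d (c / (K * 2))). split.
  { apply Rmin_pos; auto. apply Rdiv_lt_0_compat; lra. }
  intros z Hzp H0. destruct (classic (z = p)) as [|Hne]; auto. exfalso.
  set (h := Cminus z p) in *.
  assert (Hrho : 0 < cmod h).
  { apply Cmod_gt_0. intros Hh. apply Hne. unfold h in Hh.
    replace z with (Cplus (Cminus z p) p) by (match goal with |- ?L = ?R => change (@eq Coquelicot.Complex.C L R) end; ring).
    rewrite Hh. match goal with |- ?L = ?R => change (@eq Coquelicot.Complex.C L R) end; ring. }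
  pose proof (Rmin_l d (c / (K * 2))) as Hm1. pose proof (Rmin_r d (c / (K * 2))) as Hm2.
  pose proof (taylor k (F al a b tau) p d M) as T.
  specialize (T (fun j h0 u Hu => F_deriv al a b tau j p h0 u (proj1 (Hb _ Hu)))).
  specialize (T HMb Hz h ltac:(lra)).
  unfold h in T. rewrite line_1 in T. fold h in T. rewrite H0 in T.
  replace (Cminus (CR 0) (Cmult (Cmult (F al a b tau k p) (Cpow h k)) (CR (/ INR (fact k)))))
    with (Copp (Cmult (Cmult (F al a b tau k p) (Cpow h k)) (CR (/ INR (fact k))))) in T
    by (match goal with |- ?L = ?R => change (@eq Coquelicot.Complex.C L R) end; ring).
  rewrite Cmod_opp, !Cmod_mult, Cmod_pow, Cmod_R, Rabs_pos_eq in T by (left; apply Rinv_0_lt_compat; auto).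
  fold c in T.
  assert (Hp : 0 < cmod h ^ k) by (apply pow_lt; auto).
  assert (T' : c <= K * cmod h).
  { unfold K. simpl pow in T.
    apply (Rmult_le_reg_r (cmod h ^ k * / INR (fact k))).
    - apply Rmult_lt_0_compat; auto. apply Rinv_0_lt_compat; auto.
    - replace (INR (fact k) * 2 ^ S k * M * cmod h * (cmod h ^ k * / INR (fact k)))
        with (2 ^ S k * M * (cmod h * cmod h ^ k)) by (field; lra).
      simpl pow. lra. }
  assert (K * cmod h < K * (c / (K * 2))) by (apply Rmult_lt_compat_l; lra).
  replace (K * (c / (K * 2))) with (c / 2) in H by (field; lra). lra.
Qed.

Lemma local_slit p : in_slit_plane p ->
  exists d', 0 < d' /\ forall z, cmod (Cminus z p) < d' -> Q al a b tau z = C0 -> z = p.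
Proof.
  intros Hs.
  assert (Hk : exists k, (forall j, (j < k)%nat -> F al a b tau j p = CR 0) /\ F al a b tau k p <> CR 0).
  { destruct (classic (F al a b tau 0 p = CR 0)) as [H0|H0]; [|exists 0%nat; split; auto; intros; lia].
    destruct (classic (F al a b tau 1 p = CR 0)) as [H1|H1]; [|exists 1%nat; split; auto; intros j Hj; replace j with 0%nat by lia; auto].
    destruct (classic (F al a b tau 2 p = CR 0)) as [H2|H2].
    - exists 3%nat. split.
      + intros j Hj. destruct j as [|[|[|]]]; auto; lia.
      + intros H3. apply (F123_not_all p Hs); auto.
    - exists 2%nat. split; auto. intros j Hj. destruct j as [|[|]]; auto; lia. }
  destruct Hk as [k [Hz Hk]].
  destruct (isolate p k Hs Hz Hk) as [d' [Hd' H]]. exists d'. split; auto.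
  intros z Hz' HQ. apply H; auto. rewrite F0_Q. exact HQ.
Qed.

End Fam2.

Lemma exp_le x y : x <= y -> exp x <= exp y.
Proof. intros [H|H]; [left; apply exp_increasing; auto| rewrite H; lra]. Qed.

Lemma Rabs_sin_le u : Rabs (sin u) <= Rabs u.
Proof.
  destruct (MVT_abs sin cos 0 u) as [c [Hc _]].
  { intros c _. apply derivable_pt_lim_sin. }
  rewrite sin_0, !Rminus_0_r in Hc. rewrite Hc.
  pose proof (COS_bound c). assert (Rabs (cos c) <= 1) by (apply Rabs_le; lra).
  pose proof (Rabs_pos u). nra.
Qed.

Definition sig (al : R) := Rmin (sin (al * (PI/2))) (sin (al * PI)).

Lemma sig_pos al : 0 < al < 1 -> 0 < sig al.
Proof.
  intros H. pose proof PI_RGT_0. unfold sig. apply Rmin_glb_lt; apply sin_gt_0; nra.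
Qed.

Lemma sin_al_bound al th : 0 < al < 1 -> PI/2 <= th <= PI -> sig al <= sin (al * th).
Proof.
  intros Ha Ht. pose proof PI_RGT_0. unfold sig.
  destruct (Rle_dec (al * th) (PI/2)).
  - eapply Rle_trans; [apply Rmin_l|]. apply sin_incr_1; nra.
  - eapply Rle_trans; [apply Rmin_r|]. apply sin_decr_1; nra.
Qed.

Lemma Carg_left z : fst z <= 0 -> 0 < snd z -> PI/2 <= Carg z <= PI.
Proof.
  intros Hx Hy. destruct z as [x y]; simpl in *. rewrite Carg_B by auto.
  pose proof (atan_bound (x/y)).
  assert (atan (x/y) <= 0).
  { rewrite <- atan_0. destruct (Req_dec (x/y) 0) as [E|E]; [rewrite E; lra|].
    left; apply atan_increasing. assert (x/y <= 0). { unfold Rdiv. assert (0 < /y) by (apply Rinv_0_lt_compat; auto). nra. } lra. }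
  lra.
Qed.

Lemma Carg_left' z : fst z <= 0 -> snd z < 0 -> - PI <= Carg z <= - (PI/2).
Proof.
  intros Hx Hy. destruct z as [x y]; simpl in *. rewrite Carg_C by auto.
  pose proof (atan_bound (x/y)).
  assert (0 <= atan (x/y)).
  { rewrite <- atan_0. destruct (Req_dec (x/y) 0) as [E|E]; [rewrite E; lra|].
    left; apply atan_increasing. assert (0 <= x/y). { unfold Rdiv. assert (/y < 0) by (apply Rinv_lt_0_compat; auto). nra. } lra. }
  lra.
Qed.

Lemma snd_Q al a b tau z : snd (Q al a b tau z) =
  Rpower (rr z) al * sin (al * Carg z) + (- b) * (exp (- tau * fst z) * sin (- tau * snd z)).
Proof. unfold Q, Cadd, Cpow_principal, Cscal, Cexp, Defs.RtoC, Defs.Re, Defs.Im; simpl. change (Defs.Cmod z) with (rr z). ring. Qed.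

Lemma local_cut al a b tau p : 0 < al < 1 -> 0 < tau -> snd p = 0 -> fst p < 0 ->
  exists d, 0 < d /\ forall z, in_slit_plane z -> cmod (Cminus z p) < d -> Q al a b tau z = C0 -> False.
Proof.
  intros Ha Ht Hy Hx. set (r0 := - fst p).
  set (A := Rpower (r0/2) al * sig al).
  assert (HA : 0 < A) by (unfold A; apply Rmult_lt_0_compat; [unfold Rpower; apply exp_pos| apply sig_pos; auto]).
  set (B := Rabs b * exp (tau * (3 * r0 / 2)) * tau + 1).
  assert (HB : 0 < B).
  { unfold B. pose proof (Rabs_pos b). pose proof (exp_pos (tau * (3 * r0 / 2))).
    assert (0 <= Rabs b * exp (tau * (3 * r0 / 2)) * tau) by (apply Rmult_le_pos; [apply Rmult_le_pos|]; lra). lra. }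
  exists (Rmin (r0/2) (A / (2 * B))). split.
  { apply Rmin_pos; [unfold r0; lra| apply Rdiv_lt_0_compat; lra]. }
  intros z Hs Hd HQ.
  pose proof (Rmin_l (r0/2) (A / (2 * B))). pose proof (Rmin_r (r0/2) (A / (2 * B))).
  pose proof (fst_le_cmod (Cminus z p)) as F1. pose proof (snd_le_cmod (Cminus z p)) as F2.
  simpl in F1, F2. rewrite Hy in F2. replace (snd z + - 0) with (snd z) in F2 by ring.
  pose proof (Rle_abs (fst z + - fst p)) as X1. pose proof (Rle_abs (-(fst z + - fst p))) as X2. rewrite Rabs_Ropp in X2.
  assert (Hxz : fst z <= - (r0/2)) by (unfold r0 in *; lra).
  assert (Hxz' : - (3 * r0 / 2) <= fst z) by (unfold r0 in *; lra).
  assert (Hyz : snd z <> 0) by (intros E0; apply Hs; unfold Defs.Re, Defs.Im; split; lra).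
  assert (Hr : r0 / 2 <= rr z).
  { rewrite rr_cmod. pose proof (fst_le_cmod z). pose proof (Rabs_left1 (fst z) ltac:(lra)). lra. }
  assert (HRp : Rpower (r0/2) al <= Rpower (rr z) al) by (apply Rle_Rpower_l; unfold r0 in *; lra).
  assert (Hsin : sig al <= Rabs (sin (al * Carg z))).
  { destruct (Rlt_dec 0 (snd z)).
    - pose proof (Carg_left z ltac:(lra) r). pose proof (sin_al_bound al (Carg z) Ha H1).
      rewrite Rabs_pos_eq; [auto| pose proof (sig_pos al Ha); lra].
    - pose proof (Carg_left' z ltac:(lra) ltac:(lra)). pose proof (sin_al_bound al (- Carg z) Ha ltac:(lra)).
      replace (al * - Carg z) with (- (al * Carg z)) in H2 by ring. rewrite sin_neg in H2.
      rewrite Rabs_left1; [lra| pose proof (sig_pos al Ha); lra]. }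
  assert (Hbig : A <= Rabs (Rpower (rr z) al * sin (al * Carg z))).
  { rewrite Rabs_mult, (Rabs_pos_eq (Rpower _ _)) by (left; unfold Rpower; apply exp_pos). unfold A.
    pose proof (sig_pos al Ha). apply Rmult_le_compat; try lra. left; unfold Rpower; apply exp_pos. }
  assert (Hsmall : Rabs ((- b) * (exp (- tau * fst z) * sin (- tau * snd z))) <= (B - 1) * Rabs (snd z)).
  { rewrite !Rabs_mult, Rabs_Ropp, (Rabs_pos_eq (exp _)) by (left; apply exp_pos).
    pose proof (Rabs_sin_le (- tau * snd z)). rewrite Rabs_mult, Rabs_Ropp, (Rabs_pos_eq tau) in H1 by lra.
    assert (exp (- tau * fst z) <= exp (tau * (3 * r0 / 2))) by (apply exp_le; nra).
    unfold B. pose proof (Rabs_pos b). pose proof (Rabs_pos (sin (- tau * snd z))). pose proof (exp_pos (- tau * fst z)).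
    apply Rle_trans with (Rabs b * (exp (tau * (3 * r0 / 2)) * (tau * Rabs (snd z)))).
    - apply Rmult_le_compat_l; auto. apply Rmult_le_compat; auto; lra.
    - right; ring. }
  assert (Hy2 : Rabs (snd z) < A / (2 * B)) by lra.
  assert ((B - 1) * Rabs (snd z) < A / 2).
  { apply Rle_lt_trans with (B * Rabs (snd z)). pose proof (Rabs_pos (snd z)). nra.
    apply Rlt_le_trans with (B * (A / (2*B))). apply Rmult_lt_compat_l; auto. right; field; lra. }
  apply (f_equal snd) in HQ. rewrite snd_Q in HQ. simpl in HQ.
  assert (Rpower (rr z) al * sin (al * Carg z) = - ((- b) * (exp (- tau * fst z) * sin (- tau * snd z)))) by lra.
  rewrite H2, Rabs_Ropp in Hbig. lra.
Qed.

Lemma E_line0 tau z : E tau (line (CR 0) z 0) = CR 1.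
Proof.
  unfold E, Cexp, Cscal, line, Defs.Re, Defs.Im; simpl.
  replace (- tau * (0 + 0 * fst z)) with 0 by ring. replace (- tau * (0 + 0 * snd z)) with 0 by ring.
  rewrite exp_0, cos_0, sin_0. unfold CR. f_equal; ring.
Qed.

Lemma line0_1 z : line (CR 0) z 1 = z.
Proof. destruct z; unfold line; simpl; f_equal; ring. Qed.

Lemma E_near0 tau z : 0 < tau -> cmod z <= 1 ->
  cmod (Cminus (E tau z) (CR 1)) <= 2 * (tau * exp tau * cmod z).
Proof.
  intros Ht Hz.
  pose proof (cmvt (fun u => E tau (line (CR 0) z u)) (fun u => Cmult (Cmult (CR (- tau)) (E tau (line (CR 0) z u))) z)
     (tau * exp tau * cmod z)) as H.
  cbv beta in H. rewrite E_line0, line0_1 in H. apply H.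
  - intros t _. apply E_deriv.
  - intros t Ht'. rewrite !Cmod_mult, Cmod_R, cmod_E, Rabs_Ropp, Rabs_pos_eq by lra.
    apply Rmult_le_compat_r; [apply Cmod_ge_0|]. apply Rmult_le_compat_l; [lra|].
    apply exp_le. unfold line; simpl. pose proof (fst_le_cmod z). pose proof (Rle_abs (- fst z)). rewrite Rabs_Ropp in H1.
    assert (t * - fst z <= 1) by nra. nra.
Qed.

Lemma local_zero al a b tau : 0 < al < 1 -> 0 < tau ->
  exists d, 0 < d /\ forall z, in_slit_plane z -> cmod z < d -> Q al a b tau z = C0 -> False.
Proof.
  intros Ha Ht.
  set (K := 2 * (Rabs b * (tau * exp tau))).
  assert (HK : 0 <= K) by (unfold K; pose proof (Rabs_pos b); pose proof (exp_pos tau); apply Rmult_le_pos; [lra|]; apply Rmult_le_pos; [lra|]; nra).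
  assert (Main : forall z, in_slit_plane z -> cmod z <= 1 -> Q al a b tau z = C0 ->
      Rabs (a + b) <= Rpower (rr z) al + K * rr z /\ Rpower (rr z) al <= Rabs (a + b) + K * rr z).
  { intros z Hs Hz HQ.
    assert (EqP : P al z = Cplus (CR (a + b)) (Cmult (CR b) (Cminus (E tau z) (CR 1)))).
    { pose proof (f_equal fst HQ) as H1. pose proof (f_equal snd HQ) as H2.
      unfold Q, Cadd, Cscal, Defs.RtoC, C0, Defs.Re, Defs.Im in H1, H2. cbn [fst snd] in H1, H2.
      change (Cexp (- tau * fst z, - tau * snd z)) with (E tau z) in H1, H2.
      change (Cpow_principal z al) with (P al z) in H1, H2.
      set (PP := P al z) in *. set (EE := E tau z) in *. clearbody PP EE. destruct PP, EE. apply injective_projections; simpl in *; lra. }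
    pose proof (E_near0 tau z Ht Hz) as HE.
    assert (Hb : cmod (Cmult (CR b) (Cminus (E tau z) (CR 1))) <= K * rr z).
    { rewrite Cmod_mult, Cmod_R. unfold K. change (rr z) with (cmod z). pose proof (Rabs_pos b).
      apply Rle_trans with (Rabs b * (2 * (tau * exp tau * cmod z))). apply Rmult_le_compat_l; auto. right; ring. }
    rewrite <- cmod_P, EqP. split.
    - set (X := CR (a + b)). set (Y := Cmult (CR b) (Cminus (E tau z) (CR 1))) in *.
      pose proof (Cmod_triangle (Cplus X Y) (Copp Y)) as HT.
      replace (Cplus (Cplus X Y) (Copp Y)) with X in HT by (match goal with |- ?L = ?R => change (@eq Coquelicot.Complex.C L R) end; ring).
      rewrite Cmod_opp in HT. unfold X in HT. rewrite Cmod_R in HT. unfold X. lra.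
    - eapply Rle_trans; [apply Cmod_triangle|]. rewrite Cmod_R. lra. }
  destruct (Req_dec (a + b) 0) as [Hab|Hab].
  - set (d2 := Rpower (/ (K + 1)) (/ (1 - al))).
    assert (Hd2 : 0 < d2) by (unfold d2, Rpower; apply exp_pos).
    exists (Rmin 1 d2). split; [apply Rmin_pos; lra|].
    intros z Hs Hz HQ. pose proof (Rmin_l 1 d2). pose proof (Rmin_r 1 d2).
    destruct (Main z Hs ltac:(lra) HQ) as [_ M2]. rewrite Hab, Rabs_R0, Rplus_0_l in M2.
    pose proof (rr_pos z Hs) as Hr. rewrite <- rr_cmod in Hz.
    assert (Hlt : Rpower (rr z) (1 - al) < / (K + 1)).
    { replace (/ (K+1)) with (Rpower d2 (1 - al)).
      - apply Rlt_Rpower_l; lra.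
      - unfold d2. rewrite Rpower_mult. replace (/ (1 - al) * (1 - al)) with 1 by (field; lra).
        apply Rpower_1. apply Rinv_0_lt_compat; lra. }
    assert (Eq : Rpower (rr z) al = rr z * / Rpower (rr z) (1 - al)).
    { replace al with (1 + - (1 - al)) at 1 by ring. rewrite Rpower_plus, Rpower_1, Rpower_Ropp by auto. auto. }
    assert (Hp : 0 < Rpower (rr z) (1 - al)) by (unfold Rpower; apply exp_pos).
    assert (K + 1 < / Rpower (rr z) (1 - al)).
    { rewrite <- (Rinv_inv (K+1)). apply Rinv_lt_contravar; auto. apply Rmult_lt_0_compat; auto. lra. }
    rewrite Eq in M2. nra.
  - assert (Hc : 0 < Rabs (a + b) / 2) by (pose proof (Rabs_pos_lt _ Hab); lra).
    set (d2 := Rpower (Rabs (a + b) / 2) (/ al)).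
    assert (Hd2 : 0 < d2) by (unfold d2, Rpower; apply exp_pos).
    set (d3 := Rabs (a + b) / (2 * (K + 1))).
    assert (Hd3 : 0 < d3) by (unfold d3; apply Rdiv_lt_0_compat; lra).
    exists (Rmin 1 (Rmin d2 d3)). split; [apply Rmin_pos; [lra| apply Rmin_pos; lra]|].
    intros z Hs Hz HQ. pose proof (Rmin_l 1 (Rmin d2 d3)). pose proof (Rmin_r 1 (Rmin d2 d3)).
    pose proof (Rmin_l d2 d3). pose proof (Rmin_r d2 d3).
    destruct (Main z Hs ltac:(lra) HQ) as [M1 _].
    pose proof (rr_pos z Hs) as Hr. rewrite <- rr_cmod in Hz.
    assert (Rpower (rr z) al < Rabs (a + b) / 2).
    { replace (Rabs (a + b) / 2) with (Rpower d2 al).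
      - apply Rlt_Rpower_l; lra.
      - unfold d2. rewrite Rpower_mult. replace (/ al * al) with 1 by (field; lra). apply Rpower_1; auto. }
    assert (K * rr z < Rabs (a + b) / 2).
    { apply Rle_lt_trans with ((K + 1) * rr z). nra.
      apply Rlt_le_trans with ((K + 1) * d3). apply Rmult_lt_compat_l; lra.
      unfold d3. right; field. lra. }
    lra.
Qed.

Definition rect := ((R * R) * (R * R))%type.

Definition InR (r : rect) (z : Cplx) :=
  fst (fst r) <= fst z <= snd (fst r) /\ fst (snd r) <= snd z <= snd (snd r).

Definition FinR (Zp : Cplx -> Prop) (r : rect) := exists l, forall z, Zp z -> InR r z -> In z l.

Definition half (lo hi : R) (c : bool) : R * R :=
  if c then (lo, (lo + hi) / 2) else ((lo + hi) / 2, hi).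

Definition child (r r' : rect) :=
  exists c1 c2, r' = (half (fst (fst r)) (snd (fst r)) c1, half (fst (snd r)) (snd (snd r)) c2).

Lemma child_exists Zp r : ~ FinR Zp r -> exists r', child r r' /\ ~ FinR Zp r'.
Proof.
  intros H. apply NNPP. intros Hn. apply H.
  assert (Hall : forall c1 c2, FinR Zp (half (fst (fst r)) (snd (fst r)) c1, half (fst (snd r)) (snd (snd r)) c2)).
  { intros c1 c2. apply NNPP. intros Hc. apply Hn. eexists; split; [exists c1, c2; reflexivity| exact Hc]. }
  destruct (Hall true true) as [l1 H1]. destruct (Hall true false) as [l2 H2].
  destruct (Hall false true) as [l3 H3]. destruct (Hall false false) as [l4 H4].
  exists (l1 ++ l2 ++ l3 ++ l4). intros z Hz [[Hx1 Hx2] [Hy1 Hy2]].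
  rewrite !in_app_iff.
  destruct r as [[x0 x1] [y0 y1]]; simpl in *.
  destruct (Rle_dec (fst z) ((x0 + x1)/2)); destruct (Rle_dec (snd z) ((y0 + y1)/2)).
  - left; apply H1; auto; unfold InR; simpl; lra.
  - right; left; apply H2; auto; unfold InR; simpl; lra.
  - right; right; left; apply H3; auto; unfold InR; simpl; lra.
  - right; right; right; apply H4; auto; unfold InR; simpl; lra.
Qed.

Lemma nested_limit (lo hi : nat -> R) (w : R) :
  (forall n, lo n <= lo (S n)) -> (forall n, hi (S n) <= hi n) -> (forall n, lo n <= hi n) ->
  exists X, forall n, lo n <= X <= hi n.
Proof.
  intros Hl Hh Hlh.
  assert (Hlm : forall m k, lo m <= lo (m + k)%nat).
  { intros m k; induction k; [rewrite Nat.add_0_r; lra| rewrite Nat.add_succ_r; specialize (Hl (m + k)%nat); lra]. }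
  assert (Hhm : forall m k, hi (m + k)%nat <= hi m).
  { intros m k; induction k; [rewrite Nat.add_0_r; lra| rewrite Nat.add_succ_r; specialize (Hh (m + k)%nat); lra]. }
  assert (Hlohi : forall m n, lo m <= hi n).
  { intros m n. destruct (Nat.le_ge_cases m n) as [Hmn|Hmn].
    - replace n with (m + (n - m))%nat by lia. specialize (Hlm m (n - m)%nat). specialize (Hlh (m + (n - m))%nat). lra.
    - replace m with (n + (m - n))%nat by lia. specialize (Hhm n (m - n)%nat). specialize (Hlh (n + (m - n))%nat). lra. }
  assert (Hg : Un_growing lo) by (intros n; apply Hl).
  assert (Hub : has_ub lo) by (exists (hi 0%nat); intros x [n ->]; apply Hlohi).
  destruct (growing_cv lo Hg Hub) as [X HX].
  exists X. intros n. split.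
  - apply (growing_ineq lo X Hg HX).
  - destruct (Rle_dec X (hi n)) as [|Hn]; auto. exfalso.
    destruct (HX (X - hi n)) as [N HN]; [lra|].
    specialize (HN N (le_n N)). specialize (Hlohi N n). unfold Rdist in HN.
    rewrite Rabs_left1 in HN; lra.
Qed.

Lemma pow2_ge n : INR n <= 2 ^ n.
Proof.
  induction n; [simpl; lra|]. rewrite S_INR. simpl pow. assert (1 <= 2 ^ n) by (apply pow_R1_Rle; lra). lra.
Qed.

Lemma compact_fin (Zp : Cplx -> Prop) (r0 : rect) :
  fst (fst r0) <= snd (fst r0) -> fst (snd r0) <= snd (snd r0) ->
  (forall p, exists d, 0 < d /\ exists l, forall z, Zp z -> cmod (Cminus z p) < d -> In z l) ->
  FinR Zp r0.
Proof.
  intros Hx Hy Hloc. apply NNPP. intros Hn.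
  set (step := fun r : rect => epsilon (inhabits r) (fun r' => child r r' /\ ~ FinR Zp r')).
  set (sq := fun n => Nat.iter n step r0).
  assert (Hinv : forall n, ~ FinR Zp (sq n) /\ child (sq n) (sq (S n))).
  { induction n.
    - simpl. unfold step. split; auto. exact (proj1 (epsilon_spec (inhabits r0) (fun r' => child r0 r' /\ ~ FinR Zp r') (child_exists Zp r0 Hn))).
    - destruct IHn as [H1 H2].
      assert (Hc : ~ FinR Zp (sq (S n))).
      { change (sq (S n)) with (step (sq n)). unfold step.
        exact (proj2 (epsilon_spec (inhabits (sq n)) (fun r' => child (sq n) r' /\ ~ FinR Zp r') (child_exists Zp _ H1))). }
      split; auto. change (sq (S (S n))) with (step (sq (S n))). unfold step.
      exact (proj1 (epsilon_spec (inhabits (sq (S n))) (fun r' => child (sq (S n)) r' /\ ~ FinR Zp r') (child_exists Zp _ Hc))). }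
  set (lx := fun n => fst (fst (sq n))). set (hx := fun n => snd (fst (sq n))).
  set (ly := fun n => fst (snd (sq n))). set (hy := fun n => snd (snd (sq n))).
  set (wx := snd (fst r0) - fst (fst r0)). set (wy := snd (snd r0) - fst (snd r0)).
  assert (Hst : forall n,
       ((lx (S n) = lx n /\ hx (S n) = (lx n + hx n) / 2) \/ (lx (S n) = (lx n + hx n) / 2 /\ hx (S n) = hx n)) /\
       ((ly (S n) = ly n /\ hy (S n) = (ly n + hy n) / 2) \/ (ly (S n) = (ly n + hy n) / 2 /\ hy (S n) = hy n))).
  { intros n. destruct (proj2 (Hinv n)) as [c1 [c2 Hc]]. unfold lx, hx, ly, hy. rewrite Hc.
    destruct c1, c2; simpl; auto. }
  assert (Hwx : forall n, hx n - lx n = wx / 2 ^ n /\ hy n - ly n = wy / 2 ^ n).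
  { induction n.
    - unfold hx, lx, hy, ly, wx, wy; simpl. split; field.
    - destruct IHn as [I1 I2]. assert (0 < 2 ^ n) by (apply pow_lt; lra). simpl pow.
      destruct (Hst n) as [[[A1 A2]|[A1 A2]] [[B1 B2]|[B1 B2]]]; rewrite A1, A2, B1, B2;
      split; apply Rmult_eq_reg_r with 2; try lra; field_simplify; try lra;
      rewrite <- ?I1, <- ?I2; field_simplify; lra. }
  assert (Hwx0 : 0 <= wx) by (unfold wx; lra). assert (Hwy0 : 0 <= wy) by (unfold wy; lra).
  assert (Hord : forall n, lx n <= hx n /\ ly n <= hy n).
  { intros n. destruct (Hwx n) as [I1 I2]. assert (0 < 2 ^ n) by (apply pow_lt; lra).
    assert (0 <= wx / 2 ^ n) by (apply Rdiv_le_0_compat; lra).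
    assert (0 <= wy / 2 ^ n) by (apply Rdiv_le_0_compat; lra). lra. }
  destruct (nested_limit lx hx 0) as [X HX].
  { intros n. destruct (Hord n). destruct (Hst n) as [[[A1 A2]|[A1 A2]] _]; lra. }
  { intros n. destruct (Hord n). destruct (Hst n) as [[[A1 A2]|[A1 A2]] _]; lra. }
  { intros n; apply Hord. }
  destruct (nested_limit ly hy 0) as [Y HY].
  { intros n. destruct (Hord n). destruct (Hst n) as [_ [[A1 A2]|[A1 A2]]]; lra. }
  { intros n. destruct (Hord n). destruct (Hst n) as [_ [[A1 A2]|[A1 A2]]]; lra. }
  { intros n; apply Hord. }
  destruct (Hloc (X, Y)) as [d [Hd [l Hl]]].
  destruct (archimed_cor1 (d / (wx + wy + 1))) as [N [HN HN0]].
  { apply Rdiv_lt_0_compat; lra. }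
  apply (proj1 (Hinv N)). exists l. intros z Hz [[Z1 Z2] [Z3 Z4]]. apply Hl; auto.
  destruct (Hwx N) as [I1 I2]. fold (lx N) (hx N) (ly N) (hy N) in Z1, Z2, Z3, Z4.
  specialize (HX N). specialize (HY N).
  eapply Rle_lt_trans; [apply cmod_l1|]. simpl.
  assert (Rabs (fst z + - X) <= wx / 2 ^ N) by (apply Rabs_le; lra).
  assert (Rabs (snd z + - Y) <= wy / 2 ^ N) by (apply Rabs_le; lra).
  assert (HNp : 0 < INR N) by (apply lt_0_INR; lia).
  pose proof (pow2_ge N).
  assert ((wx + wy) / 2 ^ N <= (wx + wy + 1) * / INR N).
  { unfold Rdiv. apply Rmult_le_compat; try lra.
    - left; apply Rinv_0_lt_compat, pow_lt; lra.
    - apply Rinv_le_contravar; lra. }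
  assert ((wx + wy + 1) * / INR N < (wx + wy + 1) * (d / (wx + wy + 1))) by (apply Rmult_lt_compat_l; lra).
  replace ((wx + wy + 1) * (d / (wx + wy + 1))) with d in H3 by (field; lra).
  replace ((wx + wy) / 2 ^ N) with (wx / 2 ^ N + wy / 2 ^ N) in H2 by (field; apply pow_nonzero; lra).
  lra.
Qed.

Lemma zero_bound al a b tau rho1 z : 0 < al < 1 -> 0 < tau -> in_slit_plane z -> rho1 <= fst z ->
  Q al a b tau z = C0 -> Rabs (snd z) <= Rpower (Rabs a + Rabs b * exp (- tau * rho1) + 1) (/ al).
Proof.
  intros Ha Ht Hs Hx HQ.
  assert (EqP : P al z = Cplus (CR a) (Cmult (CR b) (E tau z))).
  { pose proof (f_equal fst HQ) as H1. pose proof (f_equal snd HQ) as H2.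
    unfold Q, Cadd, Cscal, Defs.RtoC, C0, Defs.Re, Defs.Im in H1, H2. cbn [fst snd] in H1, H2.
    change (Cexp (- tau * fst z, - tau * snd z)) with (E tau z) in H1, H2.
    change (Cpow_principal z al) with (P al z) in H1, H2.
    set (PP := P al z) in *. set (EE := E tau z) in *. clearbody PP EE. destruct PP, EE.
    apply injective_projections; simpl in *; lra. }
  assert (HA : Rpower (rr z) al <= Rabs a + Rabs b * exp (- tau * rho1)).
  { rewrite <- cmod_P, EqP. eapply Rle_trans; [apply Cmod_triangle|].
    rewrite Cmod_mult, !Cmod_R, cmod_E. pose proof (Rabs_pos b).
    assert (exp (- tau * fst z) <= exp (- tau * rho1)) by (apply exp_le; nra).
    apply Rplus_le_compat_l. apply Rmult_le_compat_l; auto. }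
  pose proof (rr_pos z Hs) as Hr.
  assert (Hp : 0 < Rpower (rr z) al) by (unfold Rpower; apply exp_pos).
  assert (rr z <= Rpower (Rabs a + Rabs b * exp (- tau * rho1) + 1) (/ al)).
  { replace (rr z) with (Rpower (Rpower (rr z) al) (/ al)) at 1.
    - apply Rle_Rpower_l. left; apply Rinv_0_lt_compat; lra. lra.
    - rewrite Rpower_mult. replace (al * / al) with 1 by (field; lra). apply Rpower_1; auto. }
  pose proof (snd_le_cmod z). change (rr z) with (cmod z) in H. lra.
Qed.

Lemma local_all al a b tau rho1 rho2 : 0 < al < 1 -> 0 < tau -> forall p : Cplx,
  exists d, 0 < d /\ exists l, forall z,
    (in_slit_plane z /\ rho1 <= Defs.Re z <= rho2 /\ Q al a b tau z = C0) -> cmod (Cminus z p) < d -> In z l.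
Proof.
  intros Ha Ht p.
  destruct (classic (in_slit_plane p)) as [Hs|Hns].
  - destruct (local_slit al a b tau Ha Ht p Hs) as [d [Hd H]]. exists d; split; auto. exists (p :: nil).
    intros z [Hz1 [_ Hz3]] Hzd. left. symmetry. apply H; auto.
  - unfold in_slit_plane in Hns. apply NNPP in Hns. destruct Hns as [Hy Hx]. unfold Defs.Re, Defs.Im in *.
    destruct (Rlt_dec (fst p) 0) as [Hx'|Hx'].
    + destruct (local_cut al a b tau p Ha Ht Hy Hx') as [d [Hd H]]. exists d; split; auto. exists nil.
      intros z [Hz1 [_ Hz3]] Hzd. exfalso. apply (H z); auto.
    + destruct (local_zero al a b tau Ha Ht) as [d [Hd H]]. exists d; split; auto. exists nil.
      intros z [Hz1 [_ Hz3]] Hzd. exfalso. apply (H z); auto.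
      replace z with (Cminus z p); auto. destruct p as [x y]; simpl in *. assert (x = 0) by lra. subst.
      destruct z; unfold Cminus, Cplus, Copp; simpl; f_equal; ring.
Qed.

Theorem lemma3p1 (alpha a b tau : R)
  (Halpha : 0 < alpha < 1) (Htau : 0 < tau) :
  forall rho1 rho2 : R, rho1 <= rho2 ->
  exists l : list Cplx,
    forall s : Cplx,
      in_slit_plane s -> rho1 <= Re s <= rho2 -> Q alpha a b tau s = C0 ->
      In s l.
Proof.
  intros rho1 rho2 Hr.
  set (Yb := Rpower (Rabs a + Rabs b * exp (- tau * rho1) + 1) (/ alpha)).
  assert (HY : 0 <= Yb) by (unfold Yb, Rpower; left; apply exp_pos).
  destruct (compact_fin (fun z => in_slit_plane z /\ rho1 <= Defs.Re z <= rho2 /\ Q alpha a b tau z = C0)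
              ((rho1, rho2), (- Yb, Yb))) as [l Hl].
  - simpl; lra.
  - simpl; lra.
  - apply local_all; auto.
  - exists l. intros s Hs Hre HQ. apply Hl; [split; [|split]; auto|].
    pose proof (zero_bound alpha a b tau rho1 s Halpha Htau Hs (proj1 Hre) HQ). fold Yb in H.
    unfold InR; simpl. unfold Defs.Re in Hre. apply Rabs_le_between in H. lra.
Qed.
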